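(* Let $\mathbf C$ be an admissible category of coframes and $L$ a topological $\mathbf C$-object. The map $\epsilon_L:L\to\mathbb P(\mathrm{pt}\,L)$, $\epsilon_L(\ell)=\ell^\bullet$, is a morphism in $\mathbf C^{\mathrm{top}}$ (from $L$ to $(\mathbb P(\mathrm{pt}\,L),\{\text{closed subsets of }\mathrm{pt}\,L\})$), and it is injective if and only if $L$ is spatial.
   Context: A category of coframes has coframes as objects and coframe morphisms (preserving arbitrary infima and finite suprema); it is admissible if every powerset is an object and there are classes of index sets $\mathcal I,\mathcal J$ with morphisms exactly the monotone maps preserving existing $I$-indexed infima ($I\in\mathcal I$) and $J$-indexed suprema ($J\in\mathcal J$). A topological $\mathbf C$-object is $(L,C(L))$ with $C(L)$ a sublattice of $L$ of complemented elements; $\mathbf C^{\mathrm{top}}$ has as morphisms the $\mathbf C$-morphisms mapping closed elements to closed elements. $\mathrm{pt}\,L$ is the set of join-prime elements of $L$ (elements $x\ne\bot$ with $x\le\ell_1\vee\ell_2\Rightarrow x\le\ell_1$ or $x\le\ell_2$), $\ell^\bullet=\{x\in\mathrm{pt}\,L:x\le\ell\}$, and the closed subsets of $\mathrm{pt}\,L$ are the sets $c^\bullet$ with $c$ an infimum of elements of $C(L)$. A coframe is spatial if every element is a supremum of join-prime elements. *)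

(* Defs.v *)
Section Order.
Context {T : Type} (le : T -> T -> Prop).

Definition is_lb (S : T -> Prop) (x : T) : Prop := forall y, S y -> le x y.
Definition is_ub (S : T -> Prop) (x : T) : Prop := forall y, S y -> le y x.
Definition is_inf (S : T -> Prop) (x : T) : Prop :=
  is_lb S x /\ forall z, is_lb S z -> le z x.
Definition is_sup (S : T -> Prop) (x : T) : Prop :=
  is_ub S x /\ forall z, is_ub S z -> le x z.

Definition pair2 (a b : T) : T -> Prop := fun y => y = a \/ y = b.
Definition empty_set : T -> Prop := fun _ => False.

Definition is_bot (x : T) : Prop := is_sup empty_set x.
Definition is_top (x : T) : Prop := is_inf empty_set x.

(* coframe: complete lattice in which binary joins distribute over
   arbitrary meets:  a \/ /\S = /\ { a \/ s | s in S } *)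
Definition is_coframe : Prop :=
  (forall x, le x x) /\
  (forall x y z, le x y -> le y z -> le x z) /\
  (forall x y, le x y -> le y x -> x = y) /\
  (forall S, exists m, is_inf S m) /\
  (forall S, exists j, is_sup S j) /\
  (forall (a m j : T) (S : T -> Prop), is_inf S m -> is_sup (pair2 a m) j ->
     is_inf (fun y => exists s, S s /\ is_sup (pair2 a s) y) j).

Definition complemented (c : T) : Prop :=
  exists d, (forall b, is_inf (pair2 c d) b -> is_bot b) /\
            (forall t, is_sup (pair2 c d) t -> is_top t).

Definition join_prime (x : T) : Prop :=
  (~ is_bot x) /\
  forall l1 l2 j, is_sup (pair2 l1 l2) j -> le x j -> le x l1 \/ le x l2.

Definition spatial : Prop :=
  forall l, is_sup (fun x => join_prime x /\ le x l) l.

Definition topological (CL : T -> Prop) : Prop :=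
  (forall c, CL c -> complemented c) /\
  (forall b, is_bot b -> CL b) /\
  (forall t, is_top t -> CL t) /\
  (forall a b m, CL a -> CL b -> is_inf (pair2 a b) m -> CL m) /\
  (forall a b j, CL a -> CL b -> is_sup (pair2 a b) j -> CL j).

End Order.

Definition image {T U : Type} (f : T -> U) (S : T -> Prop) : U -> Prop :=
  fun u => exists t, S t /\ f t = u.
Definition range {I U : Type} (g : I -> U) : U -> Prop :=
  fun u => exists i, g i = u.

Section Maps.
Context {T U : Type} (leT : T -> T -> Prop) (leU : U -> U -> Prop) (f : T -> U).

Definition monotone : Prop := forall x y, leT x y -> leU (f x) (f y).

Definition pres_inf_idx (I : Type) : Prop :=
  forall (g : I -> T) x, is_inf leT (range g) x ->
    is_inf leU (range (fun i => f (g i))) (f x).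
Definition pres_sup_idx (J : Type) : Prop :=
  forall (g : J -> T) x, is_sup leT (range g) x ->
    is_sup leU (range (fun i => f (g i))) (f x).

Definition coframe_morphism : Prop :=
  (forall S x, is_inf leT S x -> is_inf leU (image f S) (f x)) /\
  (forall b, is_bot leT b -> is_bot leU (f b)) /\
  (forall a b j, is_sup leT (pair2 a b) j -> is_sup leU (pair2 (f a) (f b)) (f j)).
End Maps.

Definition subset_le (X : Type) : (X -> Prop) -> (X -> Prop) -> Prop :=
  fun A B => forall x, A x -> B x.

Record AdmCat := {
  Obj : forall T : Type, (T -> T -> Prop) -> Prop;
  Obj_coframe : forall T (le : T -> T -> Prop), Obj T le -> is_coframe le;
  Obj_pow : forall X : Type, Obj (X -> Prop) (@subset_le X);
  Iset : Type -> Prop;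
  Jset : Type -> Prop;
  adm : forall T U (leT : T -> T -> Prop) (leU : U -> U -> Prop),
    Obj T leT -> Obj U leU -> forall f : T -> U,
      coframe_morphism leT leU f <->
      (monotone leT leU f /\
       (forall I, Iset I -> pres_inf_idx leT leU f I) /\
       (forall J, Jset J -> pres_sup_idx leT leU f J))
}.

Definition Chom (C : AdmCat) {T U} (leT : T -> T -> Prop) (leU : U -> U -> Prop)
  (f : T -> U) : Prop := coframe_morphism leT leU f.

Definition pt {T} (le : T -> T -> Prop) : Type := { x : T | join_prime le x }.

Definition bullet {T} (le : T -> T -> Prop) (l : T) : pt le -> Prop :=
  fun p => le (proj1_sig p) l.

Definition closed_pt {T} (le : T -> T -> Prop) (CL : T -> Prop)
  (A : pt le -> Prop) : Prop :=
  exists c, (exists S, (forall s, S s -> CL s) /\ is_inf le S c) /\ A = bullet le c.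

Definition Ctop_hom (C : AdmCat) {T U} (leT : T -> T -> Prop) (CLT : T -> Prop)
  (leU : U -> U -> Prop) (CLU : U -> Prop) (f : T -> U) : Prop :=
  Chom C leT leU f /\ (forall c, CLT c -> CLU (f c)).

(* Main.v *)
Require Import Defs.
From Stdlib Require Import Classical FunctionalExtensionality PropExtensionality.

Lemma pred_ext {X} (A B : X -> Prop) : (forall x, A x <-> B x) -> A = B.
Proof.
  intro H; apply functional_extensionality; intro x;
  apply propositional_extensionality; apply H.
Qed.

Lemma pow_inf2 {X} (A B m : X -> Prop) :
  is_inf (@subset_le X) (pair2 A B) m -> forall x, m x <-> A x /\ B x.
Proof.
  intros [Hlb Hg] x; split.
  - intro Hm; split; [exact (Hlb A (or_introl eq_refl) x Hm) | exact (Hlb B (or_intror eq_refl) x Hm)].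
  - intros [ha hb]. apply (Hg (fun y => y = x)); [|reflexivity].
    intros y [-> | ->] z ->; assumption.
Qed.

Lemma pow_sup2 {X} (A B j : X -> Prop) :
  is_sup (@subset_le X) (pair2 A B) j -> forall x, j x <-> A x \/ B x.
Proof.
  intros [Hub Hl] x; split.
  - intro Hj. apply (Hl (fun x => A x \/ B x)); [|exact Hj].
    intros y [-> | ->] z hz; auto.
  - intros [h|h]; [exact (Hub A (or_introl eq_refl) x h) | exact (Hub B (or_intror eq_refl) x h)].
Qed.

Lemma pow_bot {X} (b : X -> Prop) : is_bot (@subset_le X) b -> forall x, ~ b x.
Proof.
  intros [_ Hl] x hx. exact (Hl (fun _ => False) (fun y H => match H with end) x hx).
Qed.

Lemma pow_top {X} (t : X -> Prop) : is_top (@subset_le X) t -> forall x, t x.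
Proof.
  intros [_ Hl] x. exact (Hl (fun _ => True) (fun y H => match H with end) x I).
Qed.

Theorem mainTheorem16 (C : AdmCat) (T : Type) (le : T -> T -> Prop)
  (CL : T -> Prop) :
  Obj C T le -> topological le CL ->
  (topological (@subset_le (pt le)) (closed_pt le CL) /\
   Ctop_hom C le CL (@subset_le (pt le)) (closed_pt le CL) (bullet le)) /\
  ((forall l m : T, bullet le l = bullet le m -> l = m) <-> spatial le).
Proof.
  intros HO Htop.
  destruct (Obj_coframe C T le HO) as (Hrefl & Htrans & Hanti & Hinf & Hsup & _).
  destruct Htop as (Hcomp & Hbot & Htopc & Hmeet & Hjoin).
  assert (botle : forall b z, is_bot le b -> le b z).
  { intros b z [_ Hb]. apply Hb. intros y []. }
  assert (nb : forall x b, join_prime le x -> is_bot le b -> ~ le x b).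
  { intros x b [Hnb _] Hb hx. apply Hnb. split; [intros y []|].
    intros z _. exact (Htrans _ _ _ hx (botle b z Hb)). }
  split; [split|].
  - split; [|split; [|split; [|split]]].
    + intros A _. exists (fun x => ~ A x). split.
      * intros b Hb. pose proof (pow_inf2 _ _ _ Hb) as H.
        split; [intros y []|]. intros z _ x Hx. apply H in Hx as [h1 h2]. contradiction.
      * intros t Ht. pose proof (pow_sup2 _ _ _ Ht) as H.
        split; [intros y []|]. intros z _ x _. apply H. apply classic.
    + intros b Hb. destruct (Hsup empty_set) as [bo Hbo]. exists bo. split.
      * exists (fun s => s = bo). split; [intros s ->; apply Hbot; exact Hbo|].
        split; [intros y ->; apply Hrefl| intros z Hz; apply Hz; reflexivity].
      * apply pred_ext; intros p; split.
        -- intro Hp; exfalso; exact (pow_bot _ Hb p Hp).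
        -- intro Hp. exfalso. destruct p as [x jx]. unfold bullet in Hp; simpl in Hp.
           exact (nb x bo jx Hbo Hp).
    + intros t Ht. destruct (Hinf empty_set) as [tp Htp]. exists tp. split.
      * exists (fun s => s = tp). split; [intros s ->; apply Htopc; exact Htp|].
        split; [intros y ->; apply Hrefl| intros z Hz; apply Hz; reflexivity].
      * apply pred_ext; intros p; split; intro.
        -- unfold bullet. apply (proj2 Htp). intros y [].
        -- apply pow_top; exact Ht.
    + intros A B m [c1 [[S1 [HS1 Hc1]] ->]] [c2 [[S2 [HS2 Hc2]] ->]] Hm.
      destruct (Hinf (fun s => S1 s \/ S2 s)) as [c Hc]. exists c. split.
      * exists (fun s => S1 s \/ S2 s). split; [intros s [h|h]; auto | exact Hc].
      * apply pred_ext; intro p. rewrite (pow_inf2 _ _ _ Hm p). unfold bullet. split.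
        -- intros [h1 h2]. apply (proj2 Hc). intros y [hy|hy].
           ++ exact (Htrans _ _ _ h1 (proj1 Hc1 y hy)).
           ++ exact (Htrans _ _ _ h2 (proj1 Hc2 y hy)).
        -- intro h. split.
           ++ apply (proj2 Hc1). intros y hy. exact (Htrans _ _ _ h (proj1 Hc y (or_introl hy))).
           ++ apply (proj2 Hc2). intros y hy. exact (Htrans _ _ _ h (proj1 Hc y (or_intror hy))).
    + intros A B m [c1 [[S1 [HS1 Hc1]] ->]] [c2 [[S2 [HS2 Hc2]] ->]] Hj.
      set (S := fun y => exists s1 s2, S1 s1 /\ S2 s2 /\ is_sup le (pair2 s1 s2) y).
      destruct (Hinf S) as [c Hc]. exists c. split.
      * exists S. split; [|exact Hc]. intros y (s1&s2&h1&h2&hj). apply (Hjoin s1 s2 y); auto.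
      * apply pred_ext; intro p. rewrite (pow_sup2 _ _ _ Hj p). unfold bullet.
        destruct p as [x jp]; simpl. split.
        -- intros [h|h]; apply (proj2 Hc); intros y (s1&s2&h1&h2&hj).
           ++ apply (Htrans _ _ _ h). apply (Htrans _ _ _ (proj1 Hc1 s1 h1)).
              exact (proj1 hj s1 (or_introl eq_refl)).
           ++ apply (Htrans _ _ _ h). apply (Htrans _ _ _ (proj1 Hc2 s2 h2)).
              exact (proj1 hj s2 (or_intror eq_refl)).
        -- intro h. destruct (classic (forall s1, S1 s1 -> le x s1)) as [H1|H1].
           ++ left; apply (proj2 Hc1); exact H1.
           ++ right. apply (proj2 Hc2). intros s2 hs2.
              apply not_all_ex_not in H1 as [s1 H1]. apply imply_to_and in H1 as [hs1 hn].
              destruct (Hsup (pair2 s1 s2)) as [j hj].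
              assert (hxj : le x j).
              { apply (Htrans _ _ _ h). apply (proj1 Hc j). exists s1, s2; auto. }
              destruct (proj2 jp s1 s2 j hj hxj); [contradiction | assumption].
  - split.
    + split; [|split].
      * intros S x Hx. split.
        -- intros Y [s [hs <-]] p hp. unfold bullet in *. exact (Htrans _ _ _ hp (proj1 Hx s hs)).
        -- intros Z HZ p hp. unfold bullet. apply (proj2 Hx). intros s hs.
           exact (HZ (bullet le s) (ex_intro _ s (conj hs eq_refl)) p hp).
      * intros b Hb. split; [intros y []|]. intros z _ p hp. exfalso.
        destruct p as [x jx]. unfold bullet in hp; simpl in hp. exact (nb x b jx Hb hp).
      * intros a b j Hj. split.
        -- intros y [-> | ->] p hp; unfold bullet in *.
           ++ exact (Htrans _ _ _ hp (proj1 Hj _ (or_introl eq_refl))).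
           ++ exact (Htrans _ _ _ hp (proj1 Hj _ (or_intror eq_refl))).
        -- intros z Hz p hp. unfold bullet in hp.
           destruct (proj2 (proj2_sig p) a b j Hj hp) as [h|h].
           ++ exact (Hz _ (or_introl eq_refl) p h).
           ++ exact (Hz _ (or_intror eq_refl) p h).
    + intros c hc. exists c. split; [|reflexivity].
      exists (fun s => s = c). split; [intros s ->; exact hc|].
      split; [intros y ->; apply Hrefl| intros z Hz; apply Hz; reflexivity].
  - split.
    + intros Hinj l. destruct (Hsup (fun x => join_prime le x /\ le x l)) as [j Hj].
      assert (H : bullet le j = bullet le l).
      { apply pred_ext; intro p; unfold bullet; split; intro h.
        - exact (Htrans _ _ _ h (proj2 Hj l (fun y hy => proj2 hy))).
        - exact (proj1 Hj (proj1_sig p) (conj (proj2_sig p) h)). }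
      rewrite (Hinj j l H) in Hj. exact Hj.
    + intros Hsp l m H.
      assert (E : forall y, join_prime le y -> (le y l <-> le y m)).
      { intros y jy. pose proof (f_equal (fun f => f (exist _ y jy)) H) as e.
        simpl in e. unfold bullet in e; simpl in e. rewrite e. tauto. }
      apply Hanti.
      * apply (proj2 (Hsp l)). intros y [jy hy]. apply (proj1 (Hsp m)). split; [exact jy|].
        apply E; assumption.
      * apply (proj2 (Hsp m)). intros y [jy hy]. apply (proj1 (Hsp l)). split; [exact jy|].
        apply E; assumption.
Qed.
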